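(* Let $Q:\mathcal{Z}\times\Theta\to\mathbb{R}$ be measurable with $A(\theta)=EQ(Z,\theta)$ existing for all $\theta\in\Theta$ and $A(e_1),\dots,A(e_M)$ finite, and let $Q_1(z,\theta,\theta')=Q(z,\theta)-Q(z,\theta')$. Assume that for some $\beta>0$ there is a Borel function $\Psi_\beta:\Theta\times\Theta\to\mathbb{R}_+$ such that $\theta\mapsto\Psi_\beta(\theta,\theta')$ is concave on $\Theta$ for each fixed $\theta'\in\Theta$, $\Psi_\beta(\theta,\theta)=1$, and $E\exp(-Q_1(Z,\theta,\theta')/\beta)\le\Psi_\beta(\theta,\theta')$ for all $\theta,\theta'\in\Theta$. Then the mirror averaging aggregate $\hat\theta_n$ with parameter $\beta$ satisfies, for any $M\ge2$, $n\ge1$, $$E_{n-1}A(\hat\theta_n)\le\min_{1\le j\le M}A(e_j)+\frac{\beta\log M}{n}.$$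
   Context: $(\mathcal{Z},\mathfrak{F})$ is a measurable space, $M\ge2$, $\Theta=\{\theta\in\mathbb{R}^M:\sum_j\theta^{(j)}=1,\theta^{(j)}\ge0\}$, $e_j$ the $j$th unit vector, $z^{(j)}$ the $j$th component of $z\in\mathbb{R}^M$. $Z$ is a $\mathcal{Z}$-valued random variable with distribution $P$, expectation $E$; $Z_1,\dots,Z_n$ i.i.d. copies of $Z$; $E_{n-1}$ is expectation w.r.t. $(Z_1,\dots,Z_{n-1})$. Mirror averaging aggregate with parameter $\beta>0$: $W_\beta(\zeta)=\beta\log\big(\frac1M\sum_{j}e^{-\zeta^{(j)}/\beta}\big)$; $\zeta_0=0$, $\zeta_i=\zeta_{i-1}+u_i$ for $i=1,\dots,n-1$ with $u_i=(Q(Z_i,e_1),\dots,Q(Z_i,e_M))^\top$; $\theta_i=-\nabla W_\beta(\zeta_i)$, i.e. $\theta_i^{(j)}=e^{-\zeta_i^{(j)}/\beta}/\sum_ke^{-\zeta_i^{(k)}/\beta}$, for $i=0,\dots,n-1$; $\hat\theta_n=\frac1n\sum_{i=1}^n\theta_{i-1}$. *)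

(* Defs.v *)
From HB Require Import structures.
From mathcomp Require Import all_boot all_order all_algebra.
From mathcomp Require Import all_classical all_reals all_analysis.
Set Implicit Arguments. Unset Strict Implicit. Unset Printing Implicit Defensive.
Import Order.TTheory GRing.Theory Num.Theory.
Local Open Scope classical_set_scope.
Local Open Scope ring_scope.

Section mirror.
Variables (R : realType) (M : nat).

(* points of R^M are M-tuples (so that R^M carries the product sigma-algebra) *)
Definition unit_vec (j : 'I_M) : M.-tuple R := [tuple ((k == j)%:R : R) | k < M].

Definition simplex : set (M.-tuple R) :=
  [set th | (forall j, 0 <= tnth th j) /\ \sum_(j < M) tnth th j = 1].

Definition tconv (t : R) (a b : M.-tuple R) : M.-tuple R :=
  [tuple (1 - t) * tnth a j + t * tnth b j | j < M].

Definition concave_on (D : set (M.-tuple R)) (f : M.-tuple R -> R) : Prop :=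
  forall a b t, D a -> D b -> 0 <= t <= 1 ->
    (1 - t) * f a + t * f b <= f (tconv t a b).

Variable (T : Type) (Q : T -> M.-tuple R -> R).

(* zeta_i = u_1 + ... + u_i, computed from the observations zs = (Z_1, ..., Z_{n-1}) *)
Definition zeta (zs : seq T) (i : nat) (j : 'I_M) : R :=
  \sum_(z <- take i zs) Q z (unit_vec j).

(* theta_i = - grad W_beta (zeta_i) *)
Definition mtheta (beta : R) (zs : seq T) (i : nat) : M.-tuple R :=
  [tuple expR (- zeta zs i j / beta) / \sum_(k < M) expR (- zeta zs i k / beta) | j < M].

(* mirror averaging aggregate hat theta_n = (1/n) sum_{i=1}^n theta_{i-1} *)
Definition mirror_avg (beta : R) (n : nat) (zs : seq T) : M.-tuple R :=
  [tuple n%:R^-1 * \sum_(i < n) tnth (mtheta beta zs i) j | j < M].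

End mirror.

Section iter_expect.
Variables (d : measure_display) (T : measurableType d) (R : realType)
  (P : probability T R).

(* E_k f: expectation w.r.t. k i.i.d. copies (Z_1,...,Z_k) of Z ~ P, written as
   the iterated integral int dP(z_1) ... int dP(z_k) f [:: z_1; ...; z_k] *)
Fixpoint Eiter (k : nat) (f : seq T -> \bar R) : \bar R :=
  match k with
  | 0 => f [::]
  | k'.+1 => (\int[P]_z Eiter k' (fun s => f (z :: s)))%E
  end.

Definition expect_exists (f : T -> R) : Prop :=
  (\int[P]_z (Num.max (f z) 0)%:E < +oo)%E \/ (\int[P]_z (Num.max (- f z) 0)%:E < +oo)%E.

End iter_expect.

Arguments simplex : clear implicits.
Arguments unit_vec : clear implicits.

(* Main.v *)
Require Import Defs.
From HB Require Import structures.
From mathcomp Require Import all_boot all_order all_algebra.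
From mathcomp Require Import all_classical all_reals all_analysis.
From mathcomp Require Import measurable_realfun.
From mathcomp Require Import ring lra.
Import Order.TTheory GRing.Theory Num.Theory.
Local Open Scope classical_set_scope.
Local Open Scope ring_scope.
Set Implicit Arguments. Unset Strict Implicit. Unset Printing Implicit Defensive.

Section A.
Context (d : measure_display) (Z : measurableType d) (R : realType)
  (P : probability Z R).
Local Open Scope ereal_scope.

Lemma ge0_le_int_gen (f g : Z -> \bar R) : (forall z, 0 <= f z) ->
  (forall z, f z <= g z) -> \int[P]_z f z <= \int[P]_z g z.
Proof.
move=> f0 fg; rewrite !ge0_integralTE //; last first.
  by move=> z; exact: le_trans (f0 z) (fg z).
apply: le_ereal_sup => _ [h /= hf <-]; exists h => //= x.
exact: le_trans (hf x) (fg x).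
Qed.

Lemma le_int_gen (f g : Z -> \bar R) :
  (forall z, f z <= g z) -> \int[P]_z f z <= \int[P]_z g z.
Proof.
move=> fg; rewrite (integralE _ _ f) (integralE _ _ g).
apply: leeB.
  apply: ge0_le_int_gen => z; first exact: funepos_ge0.
  by rewrite !funeposE; apply: le_max2 => //.
apply: ge0_le_int_gen => z; first exact: funeneg_ge0.
rewrite !funenegE; apply: le_max2 => //; by rewrite leeN2.
Qed.

Lemma Eiter_mono k (f g : seq Z -> \bar R) :
  (forall s, f s <= g s) -> Eiter P k f <= Eiter P k g.
Proof.
elim: k f g => [|k IH] f g fg /=; first exact: fg.
apply: le_int_gen => z; apply: IH => s; exact: fg.
Qed.

Lemma int_cst (c : \bar R) : \int[P]_z c = c.
Proof. rewrite integral_cst //; rewrite -[c in RHS]mule1; congr (_ * _); exact: probability_setT. Qed.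

Lemma Eiter_cst k (c : \bar R) : Eiter P k (fun _ => c) = c.
Proof.
elim: k => [|k IH] //=.
by rewrite IH int_cst.
Qed.

Lemma Eiter_take a b (f : seq Z -> \bar R) :
  Eiter P (a + b) (fun s => f (take a s)) = Eiter P a f.
Proof.
elim: a f => [|a IH] f /=.
  by rewrite add0n; under eq_fun do rewrite take0; rewrite Eiter_cst.
by apply: eq_integral => z _; rewrite -IH.
Qed.

Lemma Eiter_rcons k (f : seq Z -> \bar R) :
  Eiter P k.+1 f = Eiter P k (fun s => \int[P]_z f (rcons s z)).
Proof.
elim: k f => [|k IH] f //=.
apply: eq_integral => z _.
exact: (IH (fun s => f (z :: s))).
Qed.

Lemma int_affine (v : Z -> R) (c b : R) : P.-integrable setT (EFin \o v) ->
  \int[P]_z (c + b * v z)%:E = (c + b * fine (\int[P]_z (v z)%:E))%:E.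
Proof.
move=> vi.
under eq_integral do rewrite EFinD EFinM.
rewrite integralD //; last 2 first.
- exact: finite_measure_integrable_cst.
- exact: integrableZl.
rewrite integralZl // int_cst EFinD EFinM fineK //.
exact: integrable_fin_num.
Qed.

Lemma Eiter_affine (v : Z -> R) k (a b : R) : P.-integrable setT (EFin \o v) ->
  Eiter P k (fun s => (a + b * \sum_(z <- s) v z)%:E) =
  (a + b * k%:R * fine (\int[P]_z (v z)%:E))%:E.
Proof.
move=> vi; elim: k a => [|k IH] a /=.
  by rewrite big_nil !mulr0 mul0r.
under eq_integral => z _.
  under eq_fun do rewrite big_cons mulrDr addrA.
  rewrite IH; over.
rewrite /=.
under eq_integral do rewrite -addrA (addrC (b * v _)%R) addrA.
rewrite int_affine //; congr (_%:E).
rewrite -nat1r; ring.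
Qed.


Import HBNNSimple.

Lemma par_int_ge0 (dX : measure_display) (X : measurableType dX)
  (F : X * Z -> \bar R) : measurable_fun setT F -> (forall p, 0 <= F p) ->
  measurable_fun setT (fun x => \int[P]_z F (x, z)).
Proof.
move=> mF F0.
apply: (measurable_fun_xsection_integral F (fun _ => P) (nnsfun_approx measurableT mF)).
- by move=> a b ab; exact/nd_nnsfun_approx.
- by move=> z; exact/cvg_nnsfun_approx.
- move=> n r.
  exact: (measurable_fun_xsection P).
Qed.

Lemma par_int (dX : measure_display) (X : measurableType dX)
  (F : X * Z -> \bar R) : measurable_fun setT F ->
  measurable_fun setT (fun x => \int[P]_z F (x, z)).
Proof.
move=> mF.
have -> : (fun x => \int[P]_z F (x, z)) =
  (fun x => \int[P]_z F^\+ (x, z) - \int[P]_z F^\- (x, z)).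
  apply/funext => x; rewrite integralE; congr (_ - _).
    by apply: eq_integral => z _; rewrite !funeposE.
  by apply: eq_integral => z _; rewrite !funenegE.
apply: emeasurable_funB.
  apply: par_int_ge0; [exact: measurable_funepos | exact: funepos_ge0].
apply: par_int_ge0; [exact: measurable_funeneg | exact: funeneg_ge0].
Qed.


Fixpoint MK (k : nat) : forall (dX : measure_display) (X : measurableType dX),
    (X -> seq Z -> R) -> Prop :=
  match k with
  | 0 => fun dX X g => measurable_fun setT (fun x => g x [::])
  | k'.+1 => fun dX X g => @MK k' _ (X * Z)%type (fun p s => g p.1 (p.2 :: s))
  end.
Arguments MK k {dX X}.

Variable (w : Z -> R).
Hypothesis w0 : forall z, (0 <= w z)%R.
Hypothesis wi : P.-integrable setT (EFin \o w).
Let Iw := fine (\int[P]_z (w z)%:E).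

Definition Good k dX (X : measurableType dX) (g : X -> seq Z -> R) :=
  MK k g /\ exists (c : X -> R) (K : R), forall x s,
    (`|g x s| <= c x + K * \sum_(z <- s) w z)%R.
Arguments Good k {dX X}.

Lemma Good_next k dX (X : measurableType dX) g : Good k.+1 g ->
  Good k (fun (p : X * Z) s => g p.1 (p.2 :: s)).
Proof.
move=> [mg [c [K hb]]]; split => //.
exists (fun p => c p.1 + K * w p.2)%R, K => p s.
by rewrite (le_trans (hb _ _))// big_cons mulrDr addrA.
Qed.

Lemma Eiter_bound k (g : seq Z -> R) (c K : R) :
  (forall s, `|g s| <= c + K * \sum_(z <- s) w z)%R ->
  Eiter P k (fun s => (g s)%:E) \is a fin_num /\
  (`|fine (Eiter P k (fun s => (g s)%:E))| <= c + K * k%:R * Iw)%R.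
Proof.
move=> hb.
have up : Eiter P k (fun s => (g s)%:E) <= (c + K * k%:R * Iw)%:E.
  rewrite -Eiter_affine //; apply: Eiter_mono => s; rewrite lee_fin.
  exact: le_trans (ler_norm _) (hb s).
have lo : ((- c) + (- K) * k%:R * Iw)%:E <= Eiter P k (fun s => (g s)%:E).
  rewrite -Eiter_affine //; apply: Eiter_mono => s; rewrite lee_fin.
  have := hb s; rewrite ler_norml => /andP[h _]; rewrite !mulNr -opprD; exact: h.
have fin : Eiter P k (fun s => (g s)%:E) \is a fin_num.
  by rewrite fin_numElt (lt_le_trans _ lo) ?ltNyr// (le_lt_trans up) ?ltry.
split => //; rewrite ler_norml; apply/andP; split.
  by rewrite -lee_fin fineK // (le_trans _ lo) // lee_fin !mulNr opprD.
by rewrite -lee_fin fineK.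
Qed.


Lemma integrable_bnd (F : Z -> \bar R) (c K : R) : measurable_fun setT F ->
  (forall z, `|F z| <= (c + K * w z)%:E) -> P.-integrable setT F.
Proof.
move=> mF hb.
apply: (@le_integrable _ _ _ P setT measurableT F (fun z => (c + K * w z)%:E)) => //.
  by move=> z _; exact: le_trans (hb z) (lee_abs _).
have -> : (fun z => (c + K * w z)%:E) = (EFin \o cst c) \+ (fun z => K%:E * (EFin \o w) z).
  by apply/funext => z /=; rewrite EFinD EFinM.
apply: integrableD => //; first exact: finite_measure_integrable_cst.
exact: integrableZl.
Qed.

Lemma Eiter_meas k : forall dX (X : measurableType dX) (g : X -> seq Z -> R),
  Good k g -> measurable_fun setT (fun x => Eiter P k (fun s => (g x s)%:E)).
Proof.
elim: k => [|k IH] dX X g hg /=.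
  by case: hg => /= mg _; apply/measurable_EFinP.
have := par_int (IH _ _ _ (Good_next hg)).
exact.
Qed.

Lemma int_next k dX (X : measurableType dX) (g : X -> seq Z -> R) :
  Good k.+1 g -> forall x,
  P.-integrable setT (fun z => Eiter P k (fun s => (g x (z :: s))%:E)).
Proof.
move=> hg x.
have mE := Eiter_meas (Good_next hg).
have [_ [c [K hb]]] := hg.
apply: (@integrable_bnd _ (c x + K * k%:R * Iw) K).
  exact: (measurable_fun_pair2 x mE).
move=> z.
have hb' : forall s, (`|g x (z :: s)| <= (c x + K * w z) + K * \sum_(z0 <- s) w z0)%R.
  by move=> s; rewrite (le_trans (hb _ _))// big_cons mulrDr addrA.
have [fin le] := Eiter_bound k hb'.
rewrite -(fineK fin) /= lee_fin (le_trans le)//.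
by rewrite -!addrA lerD2l addrC.
Qed.

Lemma Eiter_lin k : forall dX (X : measurableType dX) (g1 g2 : X -> seq Z -> R),
  Good k g1 -> Good k g2 -> forall (a b : R) x,
  Eiter P k (fun s => (a * g1 x s + b * g2 x s)%:E) =
  a%:E * Eiter P k (fun s => (g1 x s)%:E) + b%:E * Eiter P k (fun s => (g2 x s)%:E).
Proof.
elim: k => [|k IH] dX X g1 g2 h1 h2 a b x /=.
  by rewrite EFinD !EFinM.
have h1' := Good_next h1; have h2' := Good_next h2.
under eq_integral => z _ do rewrite (IH _ _ _ _ h1' h2' a b (x, z)) /=.
rewrite integralD //; last 2 first.
- exact: integrableZl (int_next h1 x).
- exact: integrableZl (int_next h2 x).
by rewrite !integralZl //; [exact: int_next h2 x | exact: int_next h1 x].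
Qed.


Lemma MK_ext k dX (X : measurableType dX) (g1 g2 : X -> seq Z -> R) :
  MK k g1 -> (forall x s, g1 x s = g2 x s) -> MK k g2.
Proof.
move=> h e; have -> : g2 = g1 by apply/funext => x; apply/funext => s; rewrite e.
exact: h.
Qed.

Lemma MK_lin k : forall dX (X : measurableType dX) (g1 g2 : X -> seq Z -> R) (a b : R),
  MK k g1 -> MK k g2 -> MK k (fun x s => a * g1 x s + b * g2 x s)%R.
Proof.
elim: k => [|k IH] dX X g1 g2 a b /= h1 h2.
  apply: measurable_funD; apply: measurable_funM => //; exact: measurable_cst.
exact: IH.
Qed.

Lemma Good_lin k dX (X : measurableType dX) (g1 g2 : X -> seq Z -> R) (a b : R) :
  Good k g1 -> Good k g2 -> Good k (fun x s => a * g1 x s + b * g2 x s)%R.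
Proof.
move=> [m1 [c1 [K1 b1]]] [m2 [c2 [K2 b2]]]; split; first exact: MK_lin.
exists (fun x => `|a| * c1 x + `|b| * c2 x)%R, (`|a| * K1 + `|b| * K2)%R => x s.
rewrite (le_trans (ler_normD _ _))// !normrM.
have := b1 x s; have := b2 x s => e2 e1.
have := ler_wpM2l (normr_ge0 a) e1; have := ler_wpM2l (normr_ge0 b) e2.
move=> f2 f1; rewrite (le_trans (lerD f1 f2))//.
by rewrite le_eqVlt; apply/orP; left; apply/eqP; ring.
Qed.

Lemma Good0 k dX (X : measurableType dX) : Good k (fun (x : X) (s : seq Z) => 0%R).
Proof.
split; last by exists (fun _ => 0%R), 0%R => x s; rewrite normr0 mul0r addr0.
elim: k dX X => [|k IH] dX X /=; first exact: measurable_cst.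
exact: IH.
Qed.

Lemma Good_ext k dX (X : measurableType dX) (g1 g2 : X -> seq Z -> R) :
  Good k g1 -> (forall x s, g1 x s = g2 x s) -> Good k g2.
Proof.
move=> h e; have -> : g2 = g1 by apply/funext => x; apply/funext => s; rewrite e.
exact: h.
Qed.

Lemma Eiter_fin k dX (X : measurableType dX) (g : X -> seq Z -> R) x :
  Good k g -> Eiter P k (fun s => (g x s)%:E) \is a fin_num.
Proof.
move=> [_ [c [K hb]]].
exact: (Eiter_bound k (fun s => hb x s)).1.
Qed.

Lemma Eiter_sum k dX (X : measurableType dX) (f : nat -> X -> seq Z -> R) m x :
  (forall i, (i < m)%N -> Good k (f i)) ->
  Eiter P k (fun s => (\sum_(i < m) f i x s)%:E) =
  \sum_(i < m) Eiter P k (fun s => (f i x s)%:E).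
Proof.
elim: m => [|m IH] hf.
  by rewrite big_ord0; under eq_fun do rewrite big_ord0; rewrite Eiter_cst.
have gs : forall m', (m' <= m.+1)%N -> Good k (fun x s => (\sum_(i < m') f i x s)%R).
  elim => [|m' IHm] hm.
    apply: Good_ext (Good0 k X) _ => y s.
    by rewrite big_ord0.
  apply: Good_ext (Good_lin 1 1 (IHm (ltnW hm)) (hf m' hm)) _ => y s.
  by rewrite big_ord_recr /= !mul1r.
rewrite big_ord_recr /=.
under eq_fun do rewrite big_ord_recr /= -[X in (X + _)%R]mul1r -[X in (_ + X)%R]mul1r.
rewrite (Eiter_lin (gs m (leqnSn m)) (hf m (ltnSn m))) !mul1e IH //.
by move=> i hi; apply: hf; exact: ltnW.
Qed.

Variables (M : nat) (q : 'I_M -> Z -> R).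
Hypothesis mq : forall j, measurable_fun setT (q j).

Lemma MK_phi (phi : ('I_M -> R) -> R)
  (hphi : forall dX (X : measurableType dX) (a : X -> 'I_M -> R),
     (forall j, measurable_fun setT (fun x => a x j)) ->
     measurable_fun setT (fun x => phi (a x))) :
  forall k i dX (X : measurableType dX) (a : X -> 'I_M -> R),
  (forall j, measurable_fun setT (fun x => a x j)) ->
  MK k (fun x s => phi (fun j => a x j + \sum_(z <- take i s) q j z)%R).
Proof.
elim => [|k IH] i dX X a ha /=.
  apply: hphi => j; apply: measurable_funD => //; exact: measurable_cst.
case: i => [|i].
  apply: (@MK_ext _ _ _ (fun p s => phi (fun j => a p.1 j + \sum_(z <- take 0 s) q j z)%R)).
    by apply: (IH 0%N _ _ (fun p j => a p.1 j)) => j; exact: measurableT_comp (ha j) measurable_fst.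
  by move=> p s; rewrite take0.
apply: (@MK_ext _ _ _ (fun p s => phi (fun j => (a p.1 j + q j p.2) + \sum_(z <- take i s) q j z)%R)).
  apply: (IH i _ _ (fun p j => a p.1 j + q j p.2)%R) => j; apply: measurable_funD.
    exact: measurableT_comp (ha j) measurable_fst.
  exact: measurableT_comp (mq j) measurable_snd.
move=> p s /=; congr phi; apply/funext => j.
by rewrite big_cons addrA.
Qed.

End A.


Lemma simplex_unit_aux (R : realType) M j : simplex R M (unit_vec R M j).
Proof.
split => [k|]; first by rewrite tnth_mktuple ler0n.
under eq_bigr do rewrite tnth_mktuple.
rewrite (bigD1 j) //= eqxx big1 ?addr0 // => k /negbTE ->.
by [].
Qed.

Section Jensen.
Context (R : realType) (M : nat) (f : M.-tuple R -> R).
Hypothesis hf : concave_on (simplex R M) f.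

Lemma jensen_aux m : (m <= M)%N -> forall th, simplex R M th ->
  (forall j : 'I_M, (m <= j)%N -> tnth th j = 0) ->
  \sum_(j < M) tnth th j * f (unit_vec R M j) <= f th.
Proof.
elim: m => [|m IH] hm th [th0 th1] hz.
  exfalso; move: th1; rewrite big1 => [/eqP|j _]; first by rewrite eq_sym oner_eq0.
  exact: hz.
set jm : 'I_M := Ordinal hm.
set t := tnth th jm.
have sum_oth : \sum_(j < M | j != jm) tnth th j = 1 - t.
  by rewrite -th1 [in RHS](bigD1 jm) //= /t addrC addrK.
have t1 : t <= 1.
  rewrite -th1 (bigD1 jm) //= lerDl; exact: sumr_ge0.
have [t_eq1|t_lt1] := eqVneq t 1.
  have oth j : j != jm -> tnth th j = 0.
    move=> hj; have := sum_oth; rewrite t_eq1 subrr => /eqP.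
    rewrite psumr_eq0 => [/allP/(_ j (mem_index_enum _))|]; last by move=> i _.
    by rewrite hj /= => /eqP.
  have -> : th = unit_vec R M jm.
    apply: eq_from_tnth => j; rewrite tnth_mktuple.
    by case: eqVneq => [->|hj]; [rewrite -/t t_eq1|rewrite oth].
  rewrite (bigD1 jm) //= big1 ?addr0.
    by rewrite tnth_mktuple eqxx mul1r.
  by move=> j hj; rewrite tnth_mktuple (negbTE hj) mul0r.
have t1' : 0 < 1 - t by rewrite subr_gt0 lt_neqAle t_lt1 t1.
set mu := [tuple (if j == jm then 0 else tnth th j / (1 - t)) | j < M].
have smu : simplex R M mu.
  split => [j|].
    rewrite tnth_mktuple; case: ifP => // _.
    by rewrite divr_ge0 // ltW.
  rewrite (bigD1 jm) //= tnth_mktuple eqxx add0r.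
  under eq_bigr => j hj do rewrite tnth_mktuple (negbTE hj).
  by rewrite -mulr_suml sum_oth mulfV // gt_eqF.
have zmu : forall j : 'I_M, (m <= j)%N -> tnth mu j = 0.
  move=> j hj; rewrite tnth_mktuple; case: eqVneq => // hne.
  rewrite hz ?mul0r //; rewrite leq_eqVlt in hj; case/orP: hj => // /eqP hj.
  by exfalso; move/eqP: hne; apply; apply/val_inj.
have ih := IH (ltnW hm) mu smu zmu.
have eth : th = tconv t mu (unit_vec R M jm).
  apply: eq_from_tnth => j; rewrite !tnth_mktuple.
  case: eqVneq => [->|hj]; first by rewrite -/t mulr0 add0r mulr1.
  by rewrite mulr0 addr0 mulrC divfK // gt_eqF.
have hc := @hf mu (unit_vec R M jm) t smu (simplex_unit_aux R jm).
have ht : 0 <= t <= 1 by rewrite th0 t1.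
have {}hc := hc ht; rewrite -eth in hc.
apply: le_trans hc.
have -> : \sum_(j < M) tnth th j * f (unit_vec R M j) =
   (1 - t) * \sum_(j < M) tnth mu j * f (unit_vec R M j) + t * f (unit_vec R M jm).
  rewrite mulr_sumr.
  rewrite [X in _ = _ + X](_ : _ = \sum_(j < M) t * tnth (unit_vec R M jm) j * f (unit_vec R M j)); last first.
    rewrite (bigD1 jm) //= big1 ?addr0; first by rewrite tnth_mktuple eqxx mulr1.
    by move=> j hj; rewrite tnth_mktuple (negbTE hj) mulr0 mul0r.
  rewrite -big_split /=; apply: eq_bigr => j _.
  have -> : tnth th j = (1 - t) * tnth mu j + t * tnth (unit_vec R M jm) j.
    by rewrite [in LHS]eth tnth_mktuple.
  ring.
by rewrite lerD2r ler_wpM2l // ltW.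
Qed.

Lemma jensen th : simplex R M th ->
  \sum_(j < M) tnth th j * f (unit_vec R M j) <= f th.
Proof.
move=> sth; apply: (jensen_aux (leqnn M)) => // j hj.
by exfalso; move: (ltn_ord j); rewrite ltnNge hj.
Qed.

End Jensen.

Section Main.
Context (d : measure_display) (Z : measurableType d) (R : realType)
  (P : probability Z R) (M : nat) (Q : Z -> M.-tuple R -> R) (beta : R).
Hypothesis hM : (2 <= M)%N.
Hypothesis mQ : measurable_fun (setT `*` simplex R M) (fun p : Z * M.-tuple R => Q p.1 p.2).
Hypothesis hb : 0 < beta.

Lemma msimplex : measurable (simplex R M).
Proof.
have -> : simplex R M = (fun th : M.-tuple R => \sum_(j < M) (`|tnth th j| - tnth th j)) @^-1` [set 0]
   `&` (fun th : M.-tuple R => \sum_(j < M) tnth th j) @^-1` [set 1].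
  apply/seteqP; split => th /=.
    move=> [h0 h1]; split => //.
    by apply: big1 => j _; rewrite ger0_norm ?subrr.
  move=> [e0 e1]; split => // j.
  have h := @psumr_eq0P _ _ predT (fun j => `|tnth th j| - tnth th j)
    (fun i _ => ltac:(by rewrite subr_ge0 ler_norm)) e0 j isT.
  by move/eqP: h; rewrite subr_eq0 => /eqP <-.
apply: measurableI.
  rewrite -[X in measurable X]setTI.
  have mf : measurable_fun setT (fun th : M.-tuple R => \sum_(j < M) (`|tnth th j| - tnth th j)).
    apply: measurable_sum => j; apply: measurable_funB; last exact: measurable_tnth.
    exact: measurableT_comp (@normr_measurable R setT) (@measurable_tnth _ R M j).
  exact: mf measurableT _ (measurable_set1 0).
rewrite -[X in measurable X]setTI.
have mf : measurable_fun setT (fun th : M.-tuple R => \sum_(j < M) tnth th j).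
  by apply: measurable_sum => j; exact: measurable_tnth.
exact: mf measurableT _ (measurable_set1 1).
Qed.


Lemma simplex_unit j : simplex R M (unit_vec R M j).
Proof.
split => [k|]; first by rewrite tnth_mktuple ler0n.
under eq_bigr do rewrite tnth_mktuple.
rewrite (bigD1 j) //= eqxx big1 ?addr0 // => k /negbTE ->.
by [].
Qed.

Lemma mQth th : simplex R M th -> measurable_fun setT (fun z => Q z th).
Proof.
move=> sth.
apply: (measurable_comp (F := setT `*` simplex R M) (f := fun p : Z * M.-tuple R => Q p.1 p.2)
   (E := setT) (g := fun z => (z, th))).
- exact: measurableX measurableT msimplex.
- by move=> _ [z _ <-].
- exact: mQ.
- apply/measurable_fun_pairP; split.
    exact: measurable_id.
  exact: measurable_cst.
Qed.

Definition q j z := Q z (unit_vec R M j).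
Definition w z := \sum_(j < M) `|q j z|.
Definition phiD (v : 'I_M -> R) := ln (\sum_(j < M) expR (- v j / beta)).
Definition phiH (v : 'I_M -> R) :=
  fine (\int[P]_z (phiD (fun j => v j + q j z))%:E)%E.
Definition zt (t : seq Z) j := \sum_(z <- t) q j z.

Lemma mq j : measurable_fun setT (q j).
Proof. exact: mQth (simplex_unit j). Qed.

Hypothesis hfin : forall j : 'I_M, (\int[P]_z (Q z (unit_vec R M j))%:E)%E \is a fin_num.

Lemma qi j : P.-integrable setT (EFin \o q j).
Proof.
have mf : measurable_fun setT (EFin \o q j) by apply/measurable_EFinP; exact: mq.
apply/integrableP; split => //.
have := hfin j; rewrite integralE fin_numB => /andP[f1 f2].
rewrite (eq_integral (fun x => (((EFin \o q j)^\+ \+ (EFin \o q j)^\-) x)%E)); last first.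
  by move=> x _; have := congr1 (fun h => h x) (fune_abse (EFin \o q j)) => <-.
rewrite ge0_integralD //; first by rewrite lte_add_pinfty // ltey_eq ?f1 ?f2.
all: by [exact: measurable_funepos | exact: measurable_funeneg |
   move=> z _; exact: funepos_ge0 | move=> z _; exact: funeneg_ge0].
Qed.

Lemma w0 z : 0 <= w z.
Proof. by apply: sumr_ge0 => j _. Qed.

Lemma wi : P.-integrable setT (EFin \o w).
Proof.
have -> : EFin \o w = (fun z => \sum_(j < M) (EFin \o (Num.norm \o q j)) z)%E.
  by apply/funext => z; rewrite /= /w -sumEFin.
apply: integrable_sum => // j _; apply: integrable_norm; exact: qi.
Qed.


Lemma hphiD dX (X : measurableType dX) (a : X -> 'I_M -> R) :
  (forall j, measurable_fun setT (fun x => a x j)) ->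
  measurable_fun setT (fun x => phiD (a x)).
Proof.
move=> ha; rewrite /phiD.
have ms : measurable_fun setT (fun x => \sum_(j < M) expR (- a x j / beta)).
  apply: measurable_sum => j.
  have h1 : measurable_fun setT (fun x => - a x j / beta).
    apply: measurable_funM; first exact: measurable_funN.
    exact: measurable_cst.
  exact: measurableT_comp (@measurable_expR R) h1.
exact: measurableT_comp (@measurable_ln R) ms.
Qed.

Lemma hphiH dX (X : measurableType dX) (a : X -> 'I_M -> R) :
  (forall j, measurable_fun setT (fun x => a x j)) ->
  measurable_fun setT (fun x => phiH (a x)).
Proof.
move=> ha; rewrite /phiH.
have mF : measurable_fun setT (fun p : X * Z => (phiD (fun j => a p.1 j + q j p.2))%:E).
  apply/measurable_EFinP; apply: (hphiD (a := fun p j => a p.1 j + q j p.2)) => j.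
  apply: measurable_funD.
    exact: measurableT_comp (ha j) measurable_fst.
  exact: measurableT_comp (mq j) measurable_snd.
exact: measurableT_comp (fine_measurable measurableT) (par_int P mF).
Qed.


Lemma lnM_ge0 : 0 <= ln (M%:R : R).
Proof. by apply: ln_ge0; rewrite ler1n; apply: leq_trans hM. Qed.

Lemma le_sum1 (v : 'I_M -> R) j : `|v j| <= \sum_(k < M) `|v k|.
Proof. by rewrite (bigD1 j) //= lerDl sumr_ge0. Qed.

Lemma sum_constM (c : R) : \sum_(j < M) c = M%:R * c.
Proof. by rewrite sumr_const card_ord mulr_natl. Qed.

Lemma phiD_bound (v : 'I_M -> R) :
  `|phiD v| <= ln (M%:R : R) + (\sum_(j < M) `|v j|) / beta.
Proof.
set V := (\sum_(j < M) `|v j|) / beta.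
have V0 : 0 <= V by apply: divr_ge0 (ltW hb); exact: sumr_ge0.
have hj j : - V <= - v j / beta <= V.
  have : `|- v j / beta| <= V.
    by rewrite normrM normrN normfV (gtr0_norm hb) ler_pM2r ?invr_gt0 // le_sum1.
  by rewrite ler_norml.
have M0 : (0 < M%:R :> R) by rewrite ltr0n; apply: leq_trans hM.
have lo : M%:R * expR (- V) <= \sum_(j < M) expR (- v j / beta).
  rewrite -sum_constM.
  by apply: ler_sum => j _; rewrite ler_expR; case/andP: (hj j).
have up : \sum_(j < M) expR (- v j / beta) <= M%:R * expR V.
  rewrite -sum_constM.
  by apply: ler_sum => j _; rewrite ler_expR; case/andP: (hj j).
have p1 : 0 < M%:R * expR (- V) by rewrite mulr_gt0 ?expR_gt0.
have p2 : 0 < M%:R * expR V by rewrite mulr_gt0 ?expR_gt0.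
have pS : 0 < \sum_(j < M) expR (- v j / beta) by apply: lt_le_trans lo.
rewrite /phiD ler_norml; apply/andP; split.
  rewrite (le_trans _ (_ : ln (M%:R * expR (- V)) <= _)) //; last first.
    by rewrite ler_ln // posrE.
  rewrite lnM ?posrE ?expR_gt0 // expRK. have := lnM_ge0. lra.
rewrite (le_trans (_ : _ <= ln (M%:R * expR V))) //.
  by rewrite ler_ln // posrE.
by rewrite lnM ?posrE ?expR_gt0 // expRK.
Qed.


Definition Iw := fine (\int[P]_z (w z)%:E)%E.

Lemma int_bound (f : Z -> R) (c K : R) : (forall z, `|f z| <= c + K * w z) ->
  (\int[P]_z (f z)%:E)%E \is a fin_num /\
  `|fine (\int[P]_z (f z)%:E)%E| <= c + K * Iw.
Proof.
move=> hf.
have up : (\int[P]_z (f z)%:E <= (c + K * Iw)%:E)%E.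
  rewrite -(int_affine _ _ wi); apply: le_int_gen => z; rewrite lee_fin.
  exact: le_trans (ler_norm _) (hf z).
have lo : (((- c) + (- K) * Iw)%:E <= \int[P]_z (f z)%:E)%E.
  rewrite -(int_affine _ _ wi); apply: le_int_gen => z; rewrite lee_fin.
  have := hf z; rewrite ler_norml => /andP[h _]; rewrite mulNr -opprD; exact: h.
have fin : (\int[P]_z (f z)%:E)%E \is a fin_num.
  by rewrite fin_numElt (lt_le_trans _ lo) ?ltNyr// (le_lt_trans up) ?ltry.
split => //; rewrite ler_norml; apply/andP; split.
  by rewrite -lee_fin fineK // (le_trans _ lo) // lee_fin mulNr opprD.
by rewrite -lee_fin fineK.
Qed.

Lemma take_sum_le (f : Z -> R) i s : (forall z, 0 <= f z) ->
  \sum_(z <- take i s) f z <= \sum_(z <- s) f z.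
Proof.
move=> f0; rewrite -{2}(cat_take_drop i s) big_cat /= lerDl.
by apply: sumr_ge0 => z _.
Qed.

Lemma zt_bound i s :
  \sum_(j < M) `|\sum_(z <- take i s) q j z| <= \sum_(z <- s) w z.
Proof.
apply: le_trans (_ : \sum_(j < M) \sum_(z <- take i s) `|q j z| <= _).
  by apply: ler_sum => j _; exact: ler_norm_sum.
rewrite exchange_big /=.
exact: take_sum_le (fun z => w0 z).
Qed.

Lemma sum_normD (a b : 'I_M -> R) :
  \sum_(j < M) `|a j + b j| <= \sum_(j < M) `|a j| + \sum_(j < M) `|b j|.
Proof. by rewrite -big_split /=; apply: ler_sum => j _; exact: ler_normD. Qed.

Lemma phiH_bound (v : 'I_M -> R) :
  `|phiH v| <= ln (M%:R : R) + (\sum_(j < M) `|v j|) / beta + beta^-1 * Iw.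
Proof.
rewrite /phiH; apply: (int_bound _).2 => z.
apply: le_trans (phiD_bound _) _.
rewrite -addrA lerD2l (mulrC beta^-1) -mulrDl ler_pM2r ?invr_gt0 //.
exact: sum_normD.
Qed.

Lemma GoodD k i dX (X : measurableType dX) (a : X -> 'I_M -> R) :
  (forall j, measurable_fun setT (fun x => a x j)) ->
  Good w k (fun x s => phiD (fun j => a x j + \sum_(z <- take i s) q j z)).
Proof.
move=> ha; split; first exact: (MK_phi mq (@hphiD)).
exists (fun x => ln (M%:R : R) + (\sum_(j < M) `|a x j|) / beta), beta^-1 => x s.
apply: le_trans (phiD_bound _) _.
rewrite -addrA lerD2l (mulrC beta^-1) -mulrDl ler_pM2r ?invr_gt0 //.
apply: le_trans (sum_normD _ _) _.
by rewrite lerD2l zt_bound.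
Qed.

Lemma GoodH k i dX (X : measurableType dX) (a : X -> 'I_M -> R) :
  (forall j, measurable_fun setT (fun x => a x j)) ->
  Good w k (fun x s => phiH (fun j => a x j + \sum_(z <- take i s) q j z)).
Proof.
move=> ha; split; first exact: (MK_phi mq (@hphiH)).
exists (fun x => ln (M%:R : R) + (\sum_(j < M) `|a x j|) / beta + beta^-1 * Iw), beta^-1 => x s.
apply: le_trans (phiH_bound _) _.
have h : (\sum_(j < M) `|a x j + \sum_(z <- take i s) q j z|) / beta <=
   (\sum_(j < M) `|a x j|) / beta + beta^-1 * \sum_(z <- s) w z.
  rewrite (mulrC beta^-1) -mulrDl ler_pM2r ?invr_gt0 //.
  apply: le_trans (sum_normD _ _) _.
  by rewrite lerD2l zt_bound.
lra.
Qed.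


Variable n : nat.
Hypothesis hn : (1 <= n)%N.

Definition S t := \sum_(j < M) expR (- zt t j / beta).

Lemma M_gt0 : (0 < M)%N.
Proof. exact: leq_trans hM. Qed.

Lemma S_gt0 t : 0 < S t.
Proof.
pose j0 : 'I_M := Ordinal M_gt0.
apply: lt_le_trans (expR_gt0 (- zt t j0 / beta)) _.
rewrite /S (bigD1 j0) //= lerDl sumr_ge0 // => j _; exact: expR_ge0.
Qed.

Lemma tnth_mtheta zs i j : tnth (mtheta Q beta zs i) j =
  expR (- zt (take i zs) j / beta) / S (take i zs).
Proof. by rewrite tnth_mktuple. Qed.

Lemma mtheta_simplex zs i : simplex R M (mtheta Q beta zs i).
Proof.
split => [j|].
  by rewrite tnth_mtheta divr_ge0 ?expR_ge0 // ltW // S_gt0.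
under eq_bigr do rewrite tnth_mtheta.
by rewrite -mulr_suml mulfV // gt_eqF // S_gt0.
Qed.

Lemma tnth_mavg zs j : tnth (mirror_avg Q beta n zs) j =
  n%:R^-1 * \sum_(i < n) tnth (mtheta Q beta zs i) j.
Proof. by rewrite tnth_mktuple. Qed.

Lemma n_gt0 : 0 < n%:R :> R.
Proof. by rewrite ltr0n. Qed.

Lemma mavg_simplex zs : simplex R M (mirror_avg Q beta n zs).
Proof.
split => [j|].
  rewrite tnth_mavg mulr_ge0 // ?invr_ge0 ?ler0n //.
  by apply: sumr_ge0 => i _; case: (mtheta_simplex zs i) => h _; exact: h.
under eq_bigr do rewrite tnth_mavg.
rewrite -mulr_sumr exchange_big /=.
under eq_bigr do rewrite (mtheta_simplex zs _).2.
by rewrite sumr_const card_ord -[1 *+ n]mulr_natr mul1r mulVf // gt_eqF // n_gt0.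
Qed.

Lemma zt_rcons t z j : zt (rcons t z) j = zt t j + q j z.
Proof. by rewrite /zt -cats1 big_cat big_seq1. Qed.

Lemma P1 zs i z :
  \sum_(j < M) tnth (mtheta Q beta zs i) j * expR (- q j z / beta) =
  S (rcons (take i zs) z) / S (take i zs).
Proof.
rewrite /S mulr_suml; apply: eq_bigr => j _.
rewrite tnth_mtheta zt_rcons mulrAC; congr (_ * _).
by rewrite -expRD; congr expR; ring.
Qed.

Definition Y zs z := \sum_(j < M) tnth (mirror_avg Q beta n zs) j *
  expR (- (q j z - Q z (mirror_avg Q beta n zs)) / beta).

Lemma pointwise zs z :
  Q z (mirror_avg Q beta n zs) <= beta * (Y zs z - 1) -
  beta / n%:R * \sum_(i < n) (phiD (zt (rcons (take i zs) z)) - phiD (zt (take i zs))).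
Proof.
set th := mirror_avg Q beta n zs.
set x := fun j => expR (- q j z / beta).
set a := fun i => \sum_(j < M) tnth (mtheta Q beta zs i) j * x j.
have a_eq i : a i = S (rcons (take i zs) z) / S (take i zs) by exact: P1.
have a_gt0 i : 0 < a i by rewrite a_eq divr_gt0 // S_gt0.
have lna i : ln (a i) = phiD (zt (rcons (take i zs) z)) - phiD (zt (take i zs)).
  by rewrite a_eq ln_div // posrE S_gt0.
set m := \sum_(j < M) tnth th j * x j.
have m_eq : m = n%:R^-1 * \sum_(i < n) a i.
  rewrite /m /a; under eq_bigr => j _ do rewrite tnth_mavg -mulrA mulr_suml.
  by rewrite -mulr_sumr [in LHS]exchange_big.
have m_gt0 : 0 < m.
  rewrite m_eq mulr_gt0 ?invr_gt0 ?n_gt0 //.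
  pose i0 : 'I_n := Ordinal hn.
  apply: lt_le_trans (a_gt0 i0) _.
  by rewrite (bigD1 i0) //= lerDl sumr_ge0 // => i _; exact: ltW.
have Y_eq : Y zs z = expR (Q z th / beta) * m.
  rewrite /Y /m mulr_sumr; apply: eq_bigr => j _.
  rewrite mulrCA; congr (_ * _); rewrite /x /= -expRD; congr expR.
  rewrite /th; ring.
have Y_gt0 : 0 < Y zs z by rewrite Y_eq mulr_gt0 ?expR_gt0.
have lnY : ln (Y zs z) = Q z th / beta + ln m.
  by rewrite Y_eq lnM ?posrE ?expR_gt0 // expRK.
have lnY_le : ln (Y zs z) <= Y zs z - 1.
  have := @le_ln1Dx R (Y zs z - 1); rewrite [1 + _]addrC subrK; apply.
  have := Y_gt0; lra.
have amgm : \sum_(i < n) ln (a i) <= n%:R * ln m.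
  have hi i : ln (a i) <= ln m + (a i / m - 1).
    have := @le_ln1Dx R (a i / m - 1); rewrite [1 + _]addrC subrK.
    rewrite ln_div ?posrE // => h.
    have := divr_gt0 (a_gt0 i) m_gt0 => hp.
    have := h (ltac:(lra)).
    lra.
  apply: le_trans (_ : _ <= \sum_(i < n) (ln m + (a i / m - 1))) _.
    by apply: ler_sum => i _; exact: hi.
  rewrite big_split /= sumr_const card_ord -mulr_natl.
  rewrite big_split /= sumr_const card_ord -mulr_natl -mulr_suml.
  have -> : \sum_(i < n) a i = n%:R * m.
    by rewrite m_eq mulrA mulfV ?mul1r // gt_eqF // n_gt0.
  rewrite -mulrA mulfV ?mulr1 ?gt_eqF //.
  lra.
have hQ : Q z th = beta * (ln (Y zs z) - ln m).
  by rewrite lnY addrK mulrC divfK // gt_eqF.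
rewrite hQ.
under eq_bigr do rewrite -lna.
have h1 : beta / n%:R * \sum_(i < n) ln (a i) <= beta * ln m.
  rewrite -mulrA ler_pM2l // ler_pdivrMl ?n_gt0 //.
have h2 : beta * ln (Y zs z) <= beta * (Y zs z - 1) by rewrite ler_pM2l.
lra.
Qed.


Variable Psi : M.-tuple R -> M.-tuple R -> R.
Hypothesis hconc : forall th', simplex R M th' -> concave_on (simplex R M) (fun th => Psi th th').
Hypothesis hPsi1 : forall th, simplex R M th -> Psi th th = 1.
Hypothesis hexp : forall th th', simplex R M th -> simplex R M th' ->
     (\int[P]_z (expR (- (Q z th - Q z th') / beta))%:E <= (Psi th th')%:E)%E.

Lemma mE th : simplex R M th -> forall j,
  measurable_fun setT (fun z => expR (- (q j z - Q z th) / beta)).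
Proof.
move=> sth j.
have h : measurable_fun setT (fun z => - (q j z - Q z th) / beta).
  apply: measurable_funM; last exact: measurable_cst.
  apply: measurable_funN; apply: measurable_funB; [exact: mq | exact: mQth].
exact: measurableT_comp (@measurable_expR R) h.
Qed.

Lemma mY zs : measurable_fun setT (Y zs).
Proof.
apply: measurable_sum => j; apply: measurable_funM; first exact: measurable_cst.
exact: mE (mavg_simplex zs) j.
Qed.

Lemma Y_ge0 zs z : 0 <= Y zs z.
Proof.
apply: sumr_ge0 => j _; rewrite mulr_ge0 ?expR_ge0 //.
by case: (mavg_simplex zs) => h _; exact: h.
Qed.

Lemma intY zs : (\int[P]_z (Y zs z)%:E <= 1)%E.
Proof.
set th := mirror_avg Q beta n zs.
have sth : simplex R M th := mavg_simplex zs.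
rewrite /Y; under eq_integral do rewrite -sumEFin.
rewrite ge0_integral_sum //; last 2 first.
- by move=> j; apply/measurable_EFinP; apply: measurable_funM;
    [exact: measurable_cst | exact: mE].
- by move=> j z _; rewrite lee_fin mulr_ge0 ?expR_ge0 //; case: sth => h _; exact: h.
have th0 j : 0 <= tnth th j by case: sth => h _; exact: h.
apply: le_trans (_ : (_ <= \sum_(j < M) ((tnth th j)%:E * (Psi (unit_vec R M j) th)%:E))%E) _.
  apply: lee_sum => j _.
  under eq_integral do rewrite EFinM.
  rewrite ge0_integralZl //; try (by apply/measurable_EFinP; exact: mE);
    try (by move=> z _; rewrite lee_fin expR_ge0); try (by rewrite lee_fin).
  apply: lee_pmul => //; first by rewrite lee_fin.
    by apply: integral_ge0 => z _; rewrite lee_fin expR_ge0.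
  exact: hexp (simplex_unit j) sth.
under eq_bigr do rewrite -EFinM.
rewrite sumEFin lee_fin -(hPsi1 sth).
exact: (jensen (f := fun t => Psi t th) (hconc sth) sth).
Qed.


Lemma Dr_eq t z : phiD (zt (rcons t z)) = phiD (fun j => zt t j + q j z).
Proof. by congr phiD; apply/funext => j; exact: zt_rcons. Qed.

Lemma mDr t : measurable_fun setT (fun z => phiD (zt (rcons t z))).
Proof.
have -> : (fun z => phiD (zt (rcons t z))) = (fun z => phiD (fun j => zt t j + q j z)).
  by apply/funext => z; exact: Dr_eq.
apply: (hphiD (a := fun z j => zt t j + q j z)) => j.
apply: measurable_funD; [exact: measurable_cst | exact: mq].
Qed.

Lemma Dr_bound t z : `|phiD (zt (rcons t z))| <=
  (ln (M%:R : R) + (\sum_(j < M) `|zt t j|) / beta) + beta^-1 * w z.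
Proof.
rewrite Dr_eq; apply: le_trans (phiD_bound _) _.
rewrite -addrA lerD2l (mulrC beta^-1) -mulrDl ler_pM2r ?invr_gt0 //.
exact: sum_normD.
Qed.

Lemma Dr_int t : P.-integrable setT (fun z => (phiD (zt (rcons t z)))%:E).
Proof.
apply: (integrable_bnd wi (c := ln (M%:R : R) + (\sum_(j < M) `|zt t j|) / beta) (K := beta^-1)).
  by apply/measurable_EFinP; exact: mDr.
by move=> z; rewrite /= lee_fin Dr_bound.
Qed.

Lemma Dr_integral t : (\int[P]_z (phiD (zt (rcons t z)))%:E)%E = (phiH (zt t))%:E.
Proof.
rewrite /phiH.
under [in RHS]eq_integral do rewrite -Dr_eq.
by rewrite fineK //; exact: integrable_fin_num (Dr_int t).
Qed.

Lemma Yi zs : P.-integrable setT (fun z => (Y zs z)%:E).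
Proof.
apply/integrableP; split; first by apply/measurable_EFinP; exact: mY.
under eq_integral do rewrite gee0_abs ?lee_fin ?Y_ge0 //.
exact: le_lt_trans (intY zs) (ltry _).
Qed.

Lemma inner zs : (\int[P]_z (Q z (mirror_avg Q beta n zs))%:E <=
  (- (beta / n%:R) * \sum_(i < n) (phiH (zt (take i zs)) - phiD (zt (take i zs))))%:E)%E.
Proof.
set G := fun z => \sum_(i < n) phiD (zt (rcons (take i zs) z)).
have GE : (fun z => (G z)%:E) = (fun z => \sum_(i < n) (phiD (zt (rcons (take i zs) z)))%:E)%E.
  by apply/funext => z; rewrite sumEFin.
have Gi : P.-integrable setT (EFin \o G).
  rewrite /comp GE; apply: integrable_sum => // i _; exact: Dr_int.
have GI : fine (\int[P]_z (G z)%:E)%E = \sum_(i < n) phiH (zt (take i zs)).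
  rewrite GE integral_sum //; last by move=> i; exact: Dr_int.
  under eq_bigr do rewrite Dr_integral.
  by rewrite sumEFin.
set c := - beta + beta / n%:R * \sum_(i < n) phiD (zt (take i zs)).
set b := - (beta / n%:R).
apply: le_trans (_ : (_ <= \int[P]_z ((beta * Y zs z)%:E + (c + b * G z)%:E))%E) _.
  apply: le_int_gen => z; rewrite -EFinD lee_fin; apply: le_trans (pointwise zs z) _.
  rewrite le_eqVlt; apply/orP; left; apply/eqP.
  by rewrite /G /c /b sumrB; ring.
rewrite integralD //; last 2 first.
- have -> : (fun z => (beta * Y zs z)%:E) = (fun z => beta%:E * (Y zs z)%:E)%E.
    by apply/funext => z; rewrite EFinM.
  exact: integrableZl (Yi zs).
- have -> : (fun z => (c + b * G z)%:E) = ((EFin \o cst c) \+ (fun z => b%:E * (EFin \o G) z))%E.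
    by apply/funext => z /=; rewrite EFinD EFinM.
  apply: integrableD => //; first exact: finite_measure_integrable_cst.
  exact: integrableZl.
rewrite int_affine // GI.
under eq_integral do rewrite EFinM.
rewrite integralZl //; last exact: Yi.
have Yfin : (\int[P]_z (Y zs z)%:E)%E \is a fin_num by exact: integrable_fin_num (Yi zs).
rewrite -(fineK Yfin) -EFinM -EFinD lee_fin.
have y1 : fine (\int[P]_z (Y zs z)%:E)%E <= 1.
  by rewrite -lee_fin fineK // intY.
have hy : beta * fine (\int[P]_z (Y zs z)%:E)%E <= beta.
  by rewrite -[X in _ <= X]mulr1 ler_pM2l.
rewrite -subr_ge0.
set y := fine _ in hy y1 *.
set H := \sum_(i < n) phiH _.
have -> : - (beta / n%:R) * \sum_(i < n) (phiH (zt (take i zs)) - phiD (zt (take i zs))) -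
  (beta * y + (c + b * H)) = beta - beta * y.
  by rewrite /c /b /H sumrB; ring.
by rewrite subr_ge0.
Qed.


Definition Ef i := fine (Eiter P i (fun t => (phiD (zt t))%:E)).

Lemma D_bound t : `|phiD (zt t)| <= ln (M%:R : R) + beta^-1 * \sum_(z <- t) w z.
Proof.
apply: le_trans (phiD_bound _) _; rewrite lerD2l (mulrC beta^-1) ler_pM2r ?invr_gt0 //.
by have := zt_bound (size t) t; rewrite take_size.
Qed.

Lemma Ef_fin i : Eiter P i (fun t => (phiD (zt t))%:E) \is a fin_num.
Proof. exact: (Eiter_bound wi i D_bound).1. Qed.

Lemma Eiter_ext k (f g : seq Z -> \bar R) : (forall s, f s = g s) ->
  Eiter P k f = Eiter P k g.
Proof. by move=> e; have -> : f = g by apply/funext. Qed.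

Lemma zt0 t : (fun j => 0 + \sum_(z <- t) q j z) = zt t.
Proof. by apply/funext => j; rewrite add0r. Qed.

Lemma E_H i : (i < n)%N ->
  Eiter P n.-1 (fun s => (phiH (fun j => 0 + \sum_(z <- take i s) q j z))%:E) =
  (Ef i.+1)%:E.
Proof.
move=> hi.
have hi' : (i <= n.-1)%N by rewrite -ltnS prednK // (leq_trans _ hi).
transitivity (Eiter P i (fun t => (phiH (zt t))%:E)).
  rewrite -(Eiter_take P i (n.-1 - i)).
  rewrite (subnKC hi').
  by apply: Eiter_ext => s; rewrite zt0.
rewrite /Ef [in RHS]fineK; last exact: Ef_fin.
rewrite Eiter_rcons.
by apply: Eiter_ext => t; rewrite Dr_integral.
Qed.

Lemma E_D i : (i < n)%N ->
  Eiter P n.-1 (fun s => (phiD (fun j => 0 + \sum_(z <- take i s) q j z))%:E) =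
  (Ef i)%:E.
Proof.
move=> hi.
have hi' : (i <= n.-1)%N by rewrite -ltnS prednK // (leq_trans _ hi).
transitivity (Eiter P i (fun t => (phiD (zt t))%:E)).
  rewrite -(Eiter_take P i (n.-1 - i)) (subnKC hi').
  by apply: Eiter_ext => s; rewrite zt0.
by rewrite /Ef fineK //; exact: Ef_fin.
Qed.

Lemma Ef0 : Ef 0 = ln (M%:R : R).
Proof.
rewrite /Ef /= /phiD /zt.
under eq_bigr do rewrite big_nil oppr0 mul0r expR0.
by rewrite sum_constM mulr1.
Qed.

Lemma Efn j : - beta^-1 * n%:R * fine (\int[P]_z (q j z)%:E)%E <= Ef n.
Proof.
rewrite /Ef -lee_fin fineK; last exact: Ef_fin.
have := Eiter_affine (P := P) n 0 (- beta^-1) (qi j); rewrite add0r => <-.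
apply: Eiter_mono => t; rewrite add0r lee_fin /phiD.
have S0 : 0 < \sum_(k < M) expR (- zt t k / beta) by exact: S_gt0.
rewrite -[X in X <= _]expRK ler_ln ?posrE ?expR_gt0 //.
  rewrite (bigD1 j) //=.
  have -> : - beta^-1 * \sum_(z <- t) q j z = - zt t j / beta by rewrite /zt; ring.
  by rewrite lerDl sumr_ge0 // => k _; exact: expR_ge0.
Qed.


Lemma main_j j : (Eiter P n.-1 (fun zs => \int[P]_z (Q z (mirror_avg Q beta n zs))%:E) <=
  (fine (\int[P]_z (q j z)%:E)%E + beta * ln (M%:R : R) / n%:R)%:E)%E.
Proof.
apply: le_trans (Eiter_mono P n.-1 (fun zs => inner zs)) _.
set r := beta / n%:R.
pose a0 := fun (_ : R) (_ : 'I_M) => 0 : R.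
have ma0 : forall j, measurable_fun setT (fun x => a0 x j) by move=> k; exact: measurable_cst.
pose g1 := fun i (x : R) (s : seq Z) => phiH (fun j => a0 x j + \sum_(z <- take i s) q j z).
pose g2 := fun i (x : R) (s : seq Z) => phiD (fun j => a0 x j + \sum_(z <- take i s) q j z).
have G1 i : Good w n.-1 (g1 i) by exact: GoodH.
have G2 i : Good w n.-1 (g2 i) by exact: GoodD.
pose f := fun i (x : R) (s : seq Z) => - r * g1 i x s + r * g2 i x s.
have gf : forall i, (i < n)%N -> Good w n.-1 (f i).
  by move=> i _; exact: Good_lin.
rewrite (Eiter_ext _ (g := fun s => (\sum_(i < n) f i 0 s)%:E)); last first.
  move=> s; congr (_%:E); rewrite mulr_sumr; apply: eq_bigr => i _.
  by rewrite /f /g1 /g2 /a0 !zt0; ring.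
rewrite (Eiter_sum wi (0 : R) gf).
have e : forall i : 'I_n, Eiter P n.-1 (fun s => (f i 0 s)%:E) =
    ((- r) * Ef i.+1 + r * Ef i)%:E.
  move=> i; rewrite /f (Eiter_lin wi (G1 i) (G2 i)).
  by rewrite /g1 /g2 /a0 E_H // E_D // -!EFinM -EFinD.
under eq_bigr do rewrite e.
rewrite sumEFin lee_fin.
have tel : \sum_(i < n) (- r * Ef i.+1 + r * Ef i) = - r * (Ef n - Ef 0).
  have := telescope_sumr Ef (leq0n n); rewrite big_mkord => <-.
  by rewrite mulr_sumr; apply: eq_bigr => i _; ring.
rewrite tel Ef0.
have h := Efn j.
have r0 : 0 < r by rewrite divr_gt0 // n_gt0.
have h2 : - r * Ef n <= - r * (- beta^-1 * n%:R * fine (\int[P]_z (q j z)%:E)%E).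
  apply: ler_wnM2l h; rewrite oppr_le0; exact: ltW.
have e2 : - r * (- beta^-1 * n%:R * fine (\int[P]_z (q j z)%:E)%E) =
   fine (\int[P]_z (q j z)%:E)%E.
  rewrite /r; field.
  by rewrite (gt_eqF hb) (gt_eqF n_gt0).
have e3 : r * ln (M%:R : R) = beta * ln (M%:R : R) / n%:R by rewrite /r; ring.
lra.
Qed.

End Main.
Unset Implicit Arguments.

Theorem theorem4p2 (d : measure_display) (Z : measurableType d) (R : realType)
  (P : probability Z R) (M : nat) (Q : Z -> M.-tuple R -> R) (beta : R)
  (Psi : M.-tuple R -> M.-tuple R -> R) (n : nat) :
  (2 <= M)%N -> (1 <= n)%N ->
  measurable_fun (setT `*` simplex R M) (fun p : Z * M.-tuple R => Q p.1 p.2) ->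
  (forall th, simplex R M th -> expect_exists P (fun z => Q z th)) ->
  (forall j : 'I_M, (\int[P]_z (Q z (unit_vec R M j))%:E)%E \is a fin_num) ->
  0 < beta ->
  measurable_fun (simplex R M `*` simplex R M)
    (fun p : M.-tuple R * M.-tuple R => Psi p.1 p.2) ->
  (forall th th', simplex R M th -> simplex R M th' -> 0 <= Psi th th') ->
  (forall th', simplex R M th' -> concave_on (simplex R M) (fun th => Psi th th')) ->
  (forall th, simplex R M th -> Psi th th = 1) ->
  (forall th th', simplex R M th -> simplex R M th' ->
     (\int[P]_z (expR (- (Q z th - Q z th') / beta))%:E <= (Psi th th')%:E)%E) ->
  (Eiter P n.-1 (fun zs => \int[P]_z (Q z (mirror_avg Q beta n zs))%:E)
    <= \big[Order.min/+oo]_(j < M) (\int[P]_z (Q z (unit_vec R M j))%:E)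
       + (beta * ln M%:R / n%:R)%:E)%E.
Proof.
move=> hM hn mQ _ hfin hb _ _ hconc hPsi1 hexp.
have key := main_j hM mQ hb hfin hn hconc hPsi1 hexp.
rewrite -leeBlDr //.
apply: le_bigmin => [|j _]; first exact: leey.
rewrite leeBlDr //.
have := key j; rewrite EFinD fineK //.
exact: hfin.
Qed.
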